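(* If a game has a player $n$-transitive and strategy trivial symmetry group, then it is strictly isomorphic to a VNM symmetric game (i.e. there exist a VNM symmetric game $\Gamma'$ and a strict game isomorphism from the given game to $\Gamma'$).
   Context: A (finite normal-form) game $\Gamma=(N,A,u)$ consists of a finite set $N=\{1,\dots,n\}$ of $n\ge2$ players, a finite non-empty strategy set $A_i$ for each $i\in N$ (all of the same cardinality), $A=\times_{i\in N}A_i$, and utility functions $u_i:A\to\mathbb{R}$. A game bijection $g=(\pi;(\tau_i)_{i\in N})$ from $\Gamma_1=(N,A,u)$ to $\Gamma_2=(M,B,v)$ consists of a bijection $\pi:N\to M$ and bijections $\tau_i:A_i\to B_{\pi(i)}$; $g.i=\pi(i)$, $g.s_i=\tau_i(s_i)$, $g.s$ is the profile with $(g.s)_{\pi(i)}=\tau_i(s_i)$. It is a strict game isomorphism if $u_i(s)=v_{g.i}(g.s)$ for all $i,s$; an automorphism of $\Gamma$ is a strict game isomorphism from $\Gamma$ to itself. A symmetry group is a subgroup $G$ of the automorphism group; $G_i=\{g\in G:g.i=i\}$. $G$ is player $n$-transitive if for every $\pi\in S_N$ there is $g\in G$ with $g.i=\pi(i)$ for all $i$; strategy trivial if for every $i$ and every $g\in G_i$, $g.s_i=s_i$ for all $s_i\in A_i$. $\Gamma$ is VNM symmetric if $A_i=A_j$ for all $i,j$ and, for each $\pi\in S_N$, $u_{\pi(i)}(s_1,\dots,s_n)=u_i(s_{\pi(1)},\dots,s_{\pi(n)})$ for all $i\in N$, $(s_1,\dots,s_n)\in A$. *)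

(* Defs.v *)
From Stdlib Require Import Reals.
From mathcomp Require Import all_boot all_fingroup.
Set Implicit Arguments. Unset Strict Implicit. Unset Printing Implicit Defensive.

Record game := Game {
  player : finType;
  strat : player -> finType;
  util : player -> (forall i : player, strat i) -> Rdefinitions.R }.
Arguments strat : clear implicits.
Arguments util : clear implicits.

Definition is_game (G : game) : Prop :=
  [/\ 2 <= #|player G|,
      forall i, 0 < #|strat G i| &
      forall i j, #|strat G i| = #|strat G j| ].

Record gbij (G1 G2 : game) := GBij {
  gpi : player G1 -> player G2;
  gtau : forall i, strat G1 i -> strat G2 (gpi i) }.
Arguments gpi {G1 G2} g i.
Arguments gtau {G1 G2} g i s.

Definition is_gbij G1 G2 (g : gbij G1 G2) : Prop :=
  bijective (gpi g) /\ forall i, bijective (gtau g i).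

Definition prof_img G1 G2 (g : gbij G1 G2)
    (s : forall i, strat G1 i) (t : forall j, strat G2 j) : Prop :=
  forall i, t (gpi g i) = gtau g i (s i).

Definition strict_iso G1 G2 (g : gbij G1 G2) : Prop :=
  is_gbij g /\
  forall i s t, prof_img g s t -> util G1 i s = util G2 (gpi g i) t.

Definition automorphism G (g : gbij G G) : Prop := strict_iso g.

Definition gb_id G : gbij G G := @GBij G G id (fun i s => s).
Definition gb_comp G1 G2 G3 (h : gbij G2 G3) (g : gbij G1 G2) : gbij G1 G3 :=
  @GBij G1 G3 (fun i => gpi h (gpi g i)) (fun i s => gtau h (gpi g i) (gtau g i s)).

Definition gb_eq G1 G2 (g h : gbij G1 G2) : Prop :=
  forall i (s : strat G1 i),
    existT (fun j => strat G2 j) (gpi g i) (gtau g i s)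
    = existT (fun j => strat G2 j) (gpi h i) (gtau h i s).

Definition symmetry_group G (Gr : gbij G G -> Prop) : Prop :=
  [/\ forall g, Gr g -> automorphism g,
      Gr (gb_id G),
      forall g h, Gr g -> Gr h -> Gr (gb_comp h g) &
      forall g, Gr g -> exists2 h, Gr h &
        gb_eq (gb_comp h g) (gb_id G) /\ gb_eq (gb_comp g h) (gb_id G) ].

Definition player_n_transitive G (Gr : gbij G G -> Prop) : Prop :=
  forall p : {perm player G}, exists2 g, Gr g & forall i, gpi g i = p i.

Definition strategy_trivial G (Gr : gbij G G -> Prop) : Prop :=
  forall i g, Gr g -> gpi g i = i ->
    forall s : strat G i,
      existT (fun j => strat G j) (gpi g i) (gtau g i s)
      = existT (fun j => strat G j) i s.

Definition common_game (M S : finType)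
    (v : M -> (M -> S) -> Rdefinitions.R) : game :=
  @Game M (fun _ => S) v.

Definition vnm_symmetric (M S : finType) (v : M -> (M -> S) -> Rdefinitions.R) : Prop :=
  forall (p : {perm M}) (i : M) (s : M -> S), v (p i) s = v i (fun k => s (p k)).

(* Main.v *)
Require Import Defs.
From Stdlib Require Import Reals.
From mathcomp Require Import all_boot all_fingroup.
From Stdlib Require Import ClassicalEpsilon FunctionalExtensionality Eqdep_dec.

Set Implicit Arguments. Unset Strict Implicit. Unset Printing Implicit Defensive.

Definition gF (G : game) (g : gbij G G) (x : {i : player G & strat G i}) :
  {i : player G & strat G i} :=
  existT (fun j => strat G j) (gpi g (projT1 x)) (gtau g (projT1 x) (projT2 x)).

Lemma gF_comp G (g h : gbij G G) x : gF (gb_comp h g) x = gF h (gF g x).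
Proof. by case: x. Qed.

Lemma sig_inj (G : game) (i : player G) (a b : strat G i) :
  existT (fun j => strat G j) i a = existT (fun j => strat G j) i b -> a = b.
Proof. apply: inj_pair2_eq_dec => x y; exact: eq_comparable. Qed.

Lemma cast_sig (G : game) (a b : player G) (e : a = b) (x : strat G a) :
  existT (fun j => strat G j) b (eq_rect a (strat G) x b e)
  = existT (fun j => strat G j) a x.
Proof. by case: b / e. Qed.

Lemma gF_inv G Gr (g : gbij G G) : symmetry_group Gr -> Gr g ->
  exists2 h, Gr h & (forall x, gF h (gF g x) = x) /\ (forall x, gF g (gF h x) = x).
Proof.
case=> _ _ _ Hinv Hg; have [h Hh [E1 E2]] := Hinv g Hg.
exists h => //; split; case=> i s; [exact: (E1 i s) | exact: (E2 i s)].
Qed.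

Lemma canon G Gr (g h : gbij G G) i s :
  symmetry_group Gr -> strategy_trivial Gr -> Gr g -> Gr h ->
  gpi g i = gpi h i ->
  gF g (existT _ i s) = gF h (existT _ i s).
Proof.
move=> HS HT Hg Hh E.
have [h' Hh' [E1 E2]] := gF_inv HS Hh.
have [_ _ Hc _] := HS.
have Hpi : gpi h' (gpi g i) = i.
  by rewrite E; have := f_equal (@projT1 _ _) (E1 (existT _ i s)).
have := HT i (gb_comp h' g) (Hc _ _ Hg Hh') Hpi s.
rewrite -/(gF (gb_comp h' g) (existT _ i s)) gF_comp => E3.
by rewrite -[gF g _]E2 E3.
Qed.

Lemma gF_injective G Gr (g : gbij G G) :
  symmetry_group Gr -> Gr g -> injective (gF g).
Proof. move=> HS Hg; have [h _ [E1 _]] := gF_inv HS Hg; exact: can_inj E1. Qed.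

Theorem mainTheorem16 (G : game) (Gr : gbij G G -> Prop) :
  is_game G -> symmetry_group Gr ->
  player_n_transitive Gr -> strategy_trivial Gr ->
  exists (M S : finType) (v : M -> (M -> S) -> Rdefinitions.R),
    [/\ is_game (common_game v), vnm_symmetric v &
        exists g : gbij G (common_game v), strict_iso g].
Proof.
move=> [H2 Hpos Hcard] HS HN HT.
have : 0 < #|player G| by apply: leq_trans H2.
case/card_gt0P => i0 _.
have Hex : forall k, exists g, Gr g /\ gpi g i0 = k.
  move=> k; have [g Hg Hp] := HN (tperm i0 k).
  by exists g; split; rewrite // Hp tpermL.
pose gk k := proj1_sig (constructive_indefinite_description _ (Hex k)).
have gkP k : Gr (gk k) /\ gpi (gk k) i0 = k :=
  proj2_sig (constructive_indefinite_description _ (Hex k)).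
pose sg k (z : strat G i0) : strat G k :=
  eq_rect _ (strat G) (gtau (gk k) i0 z) k (proj2 (gkP k)).
have sgE k z : existT (fun j => strat G j) k (sg k z) = gF (gk k) (existT _ i0 z).
  exact: cast_sig.
have key : forall g, Gr g -> forall k z, sg (gpi g k) z = gtau g k (sg k z).
  move=> g Hg k z; apply: sig_inj.
  rewrite sgE.
  have -> : existT (fun j => strat G j) (gpi g k) (gtau g k (sg k z))
            = gF g (existT _ k (sg k z)) by [].
  rewrite sgE -gF_comp.
  have [_ _ Hc _] := HS.
  apply: (canon _ HS HT (proj1 (gkP _)) (Hc _ _ (proj1 (gkP k)) Hg)).
  by rewrite /= (proj2 (gkP k)) (proj2 (gkP _)).
have sg_bij k : bijective (sg k).
  apply: inj_card_bij; last by rewrite (Hcard k i0).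
  move=> a b E; apply: sig_inj.
  apply: (gF_injective HS (proj1 (gkP k))).
  by rewrite -!sgE E.
have Hbij k : exists f, cancel (sg k) f /\ cancel f (sg k).
  by case: (sg_bij k) => f H1 H3; exists f.
pose tau k := proj1_sig (constructive_indefinite_description _ (Hbij k)).
have tauP k : cancel (sg k) (tau k) /\ cancel (tau k) (sg k) :=
  proj2_sig (constructive_indefinite_description _ (Hbij k)).
pose v (j : player G) (t : player G -> strat G i0) := util G j (fun k => sg k (t k)).
exists (player G), (strat G i0), v; split.
- by split=> // ?; exact: Hpos.
- move=> p i s; have [g Hg Hp] := HN p.
  rewrite /v -Hp.
  have -> : (fun k => sg k (s (p k))) = (fun k => sg k (s (gpi g k))).
    by apply: functional_extensionality_dep => k; rewrite Hp.
  have [Haut _ _ _] := HS.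
  have [_ Hu] := Haut g Hg.
  symmetry; apply: Hu => k; exact: key.
- exists (@GBij G (common_game v) id (fun k x => tau k x)); split.
    split; first exact: (Bijective (g := id)).
    move=> k; exists (sg k); [exact: (proj2 (tauP k)) | exact: (proj1 (tauP k))].
  move=> i s t Ht; rewrite /= /v; congr (util G i _).
  apply: functional_extensionality_dep => k.
  by rewrite (Ht k) /= (proj2 (tauP k)).
Qed.
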